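(* Let $\phi:\mathbb{R}^{n\times n}\to\mathbb{R}$ be differentiable and $L$-gradient Lipschitz, and let $M^\star=\arg\min\phi$ satisfy $M^\star\succeq0$. Let $f(X)=\phi(XX^T)$. For $X\in\mathbb{R}^{n\times r}$ and $\eta\ge0$ with $X^TX+\eta I$ positive definite, the search direction $V=\nabla f(X)(X^TX+\eta I)^{-1}$ satisfies \[ \|V\|_{X,\eta}=\|\nabla f(X)\|_{X,\eta}^*\le2L\|XX^T-M^\star\|_F. \]
   Context: $\phi$ is $L$-gradient Lipschitz if $\|\nabla\phi(M+E)-\nabla\phi(M)\|_F\le L\|E\|_F$ for all $M,E$. Local norm $\|U\|_{X,\eta}=\|U(X^TX+\eta I)^{1/2}\|_F$ and dual local norm $\|U\|_{X,\eta}^*=\|U(X^TX+\eta I)^{-1/2}\|_F$. *)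

(* Defs.v *)
From HB Require Import structures.
From mathcomp Require Import all_boot all_order all_algebra.
From mathcomp Require Import all_classical all_reals all_analysis.
Set Implicit Arguments. Unset Strict Implicit. Unset Printing Implicit Defensive.
Import Order.TTheory GRing.Theory Num.Theory.
Import numFieldNormedType.Exports.
Local Open Scope ring_scope.

Definition frob (R : realType) (m k : nat) (A : 'M[R]_(m, k)) : R :=
  Num.sqrt (\sum_(i < m) \sum_(j < k) A i j ^+ 2).

(* Gradient w.r.t. the Frobenius (trace) inner product: the matrix of
   partial derivatives, (grad g M) i j = D g(M)[E_ij]. *)
Definition grad (R : realType) (m k : nat) (g : 'M[R]_(m, k) -> R)
  (M : 'M[R]_(m, k)) : 'M[R]_(m, k) :=
  \matrix_(i < m, j < k) ('d g M (delta_mx i j : 'M[R]_(m, k)) : R).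

Definition grad_lipschitz (R : realType) (m : nat) (g : 'M[R]_m -> R) (L : R) :=
  forall M E : 'M[R]_m, frob (grad g (M + E) - grad g M) <= L * frob E.

Definition psd (R : realType) (m : nat) (A : 'M[R]_m) :=
  A^T = A /\ forall x : 'cV[R]_m, 0 <= (x^T *m A *m x) 0 0.

Definition posdef (R : realType) (m : nat) (A : 'M[R]_m) :=
  A^T = A /\ forall x : 'cV[R]_m, x != 0 -> 0 < (x^T *m A *m x) 0 0.

(* Local norm ||U||_{X,eta} = ||U S||_F and dual ||U||^*_{X,eta} = ||U S^{-1}||_F,
   where S = (X^T X + eta I)^{1/2} is the PSD square root (passed explicitly). *)
Definition locnorm (R : realType) (m k : nat) (S : 'M[R]_k) (U : 'M[R]_(m, k)) : R :=
  frob (U *m S).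
Definition duallocnorm (R : realType) (m k : nat) (S : 'M[R]_k) (U : 'M[R]_(m, k)) : R :=
  frob (U *m invmx S).

(* Main.v *)
Require Import Defs.
From HB Require Import structures.
From mathcomp Require Import all_boot all_order all_algebra.
From mathcomp Require Import all_classical all_reals all_analysis.
From mathcomp Require Import ring lra.
Import Order.TTheory GRing.Theory Num.Theory.
Import numFieldNormedType.Exports.
Local Open Scope ring_scope.

Section Norms.
Set Implicit Arguments.
Context {R : realType}.

Lemma mxnorm_entry m k (A : 'M[R]_(m, k)) i j : `|A i j| <= `|A|.
Proof.
rewrite [leRHS]/Num.Def.normr/= mx_normrE.
exact: (le_bigmax _ (fun ij : 'I_m * 'I_k => `|A ij.1 ij.2|) (i, j)).
Qed.

Lemma mxnorm_le m k (A : 'M[R]_(m, k)) c :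
  0 <= c -> (forall i j, `|A i j| <= c) -> `|A| <= c.
Proof.
move=> c0 H; rewrite [leLHS]/Num.Def.normr/= mx_normrE.
by apply: bigmax_le => // -[i j] _; exact: H.
Qed.

Lemma mxnorm_mul m k p (A : 'M[R]_(m, k)) (B : 'M[R]_(k, p)) :
  `|A *m B| <= k%:R * `|A| * `|B|.
Proof.
apply: mxnorm_le; first by rewrite !mulr_ge0.
move=> i j; rewrite mxE (le_trans (ler_norm_sum _ _ _))//.
rewrite -mulrA -[k in k%:R](card_ord k) -sumr_const.
rewrite (_ : \sum_(l < k) `|A i l * B l j| = \sum_(l < k) (`|A i l| * `|B l j|)); last by apply: eq_bigr => l _; rewrite normrM.
idtac.
rewrite mulr_suml; apply: ler_sum => l _; rewrite mul1r.
by apply: ler_pM => //; apply: mxnorm_entry.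
Qed.

Lemma mxnorm_tr m k (A : 'M[R]_(m, k)) : `|A^T| <= `|A|.
Proof.
by apply: mxnorm_le => // i j; rewrite mxE mxnorm_entry.
Qed.


Lemma acl (V: zmodType) (a b c d : V): a + b + (c + d) = d + (b + c) + a.
Proof. by rewrite [c + d]addrC addrACA [RHS]addrC -addrA. Qed.

Lemma trD m k (A B : 'M[R]_(m, k)) : (A + B)^T = A^T + B^T.
Proof. by apply/matrixP => i j; rewrite !mxE. Qed.

Definition dq n r (X : 'M[R]_(n, r)) (H : 'M[R]_(n, r)) : 'M[R]_n :=
  H *m X^T + X *m H^T.

Lemma dq_linear n r (X : 'M[R]_(n, r)) : linear (dq X).
Proof.
move=> a u v; rewrite /dq linearD /= linearZ /= mulmxDl mulmxDr -!scalemxAl -!scalemxAr.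
by rewrite scalerDr addrACA.
Qed.

Definition dqL n r (X : 'M[R]_(n, r)) : {linear 'M[R]_(n, r) -> 'M[R]_n} :=
  HB.pack (dq X) (GRing.isLinear.Build _ _ _ _ _ (dq_linear X)).

Lemma dq_bound n r (X : 'M[R]_(n, r)) H : `|dq X H| <= (2 * r%:R * `|X|) * `|H|.
Proof.
rewrite /dq (le_trans (ler_normD _ _))//.
have h1 := mxnorm_mul H X^T; have h2 := mxnorm_mul X H^T.
have t1 := mxnorm_tr X; have t2 := mxnorm_tr H.
have r0 : 0 <= r%:R :> R by [].
have a1 : `|H *m X^T| <= r%:R * `|H| * `|X|.
  by apply: le_trans h1 _; rewrite ler_wpM2l // mulr_ge0.
have a2 : `|X *m H^T| <= r%:R * `|X| * `|H|.
  by apply: le_trans h2 _; rewrite ler_wpM2l // mulr_ge0.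
apply: le_trans (lerD a1 a2) _.
by rewrite le_eqVlt; apply/orP; left; apply/eqP; ring.
Qed.

Lemma diff_q n r (X : 'M[R]_(n, r)) :
  differentiable (fun Y : 'M[R]_(n, r) => Y *m Y^T) X /\
  'd (fun Y : 'M[R]_(n, r) => Y *m Y^T) X = dq X :> (_ -> _).
Proof.
have dqc : continuous (dqL X).
  apply: bounded_linear_continuous; apply/linear_boundedP.
  near=> t => H; apply: le_trans (dq_bound X H) _.
  apply: ler_wpM2r => //; near: t; apply: nbhs_pinfty_ge.
have ho : (fun H : 'M[R]_(n, r) => H *m H^T) =o_ (0 : 'M[R]_(n, r)) id.
  apply/eqoP => e e0.
  have rp : 0 < r%:R + 1 :> R by rewrite ltr_wpDl.
  near=> H.
  apply: le_trans (mxnorm_mul H H^T) _.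
  have hH : `|H| <= e / (r%:R + 1).
    by near: H; rewrite !near_simpl; apply: nbhs0_le; rewrite divr_gt0.
  have t2 := mxnorm_tr H.
  apply: le_trans (_ : r%:R * `|H| * `|H| <= e * `|H|).
    by rewrite ler_wpM2l // mulr_ge0.
  rewrite ler_wpM2r //.
  rewrite ler_pdivlMr // in hH.
  apply: le_trans hH; rewrite mulrC ler_wpM2l //.
  by rewrite lerDl.
have E : (fun Y : 'M[R]_(n, r) => Y *m Y^T) \o shift X =
   cst (X *m X^T) + dqL X + (fun H : 'M[R]_(n, r) => H *m H^T).
  apply/funext => H /=.
  change ((H + X) *m (H + X)^T = X *m X^T + dq X H + H *m H^T).
  rewrite /dq trD mulmxDl !mulmxDr.
  by rewrite acl.
have eq1 : (fun Y : 'M[R]_(n, r) => Y *m Y^T) \o shift X =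
   cst (X *m X^T) + dqL X +o_ (0 : 'M[R]_(n, r)) id.
  by apply/eqaddoE; rewrite E {1}ho.
have dd := diff_unique dqc eq1.
split; last exact: dd.
by apply/diff_locallyP; rewrite dd; split.
Unshelve. all: by end_near.
Qed.


Lemma sum_delta k (j : 'I_k) (F : 'I_k -> R) : \sum_(l < k) (l == j)%:R * F l = F j.
Proof.
rewrite (bigD1 j) //= eqxx mul1r big1 ?addr0 // => l /negbTE ->; by rewrite mul0r.
Qed.

Lemma dmul1 n r (X : 'M[R]_(n, r)) (i : 'I_n) (j : 'I_r) (a b : 'I_n) :
  (delta_mx i j *m X^T) a b = (a == i)%:R * X b j.
Proof.
rewrite mxE (bigD1 j) //= !mxE eqxx andbT big1 ?addr0 // => l /negbTE hl.
by rewrite !mxE hl andbF mul0r.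
Qed.

Lemma dmul2 n r (X : 'M[R]_(n, r)) (i : 'I_n) (j : 'I_r) (a b : 'I_n) :
  (X *m (delta_mx i j)^T) a b = X a j * (b == i)%:R.
Proof.
rewrite mxE (bigD1 j) //= !mxE eqxx andbT big1 ?addr0 // => l /negbTE hl.
by rewrite !mxE hl andbF mulr0.
Qed.

Lemma d_repr m k (l : {linear 'M[R]_(m, k) -> R^o}) (E : 'M[R]_(m, k)) :
  l E = \sum_a \sum_b E a b * l (delta_mx a b).
Proof.
rewrite {1}(matrix_sum_delta E) linear_sum; apply: eq_bigr => a _.
rewrite linear_sum; apply: eq_bigr => b _.
by rewrite linearZ.
Qed.

Lemma grad_f n r (phi : 'M[R]_n -> R) (X : 'M[R]_(n, r)) :
  (forall M : 'M[R]_n, differentiable phi M) ->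
  grad (fun Y : 'M[R]_(n, r) => phi (Y *m Y^T)) X =
  (grad phi (X *m X^T) + (grad phi (X *m X^T))^T) *m X.
Proof.
move=> dphi; set G := grad phi (X *m X^T).
have [dq1 dq2] := diff_q X.
apply/matrixP => i j; rewrite /grad mxE.
rewrite (_ : (fun Y : 'M[R]_(n, r) => phi (Y *m Y^T)) = phi \o (fun Y => Y *m Y^T)) //.
rewrite diff_comp // dq2 /= d_repr.
have hG a b : 'd phi (X *m X^T) (delta_mx a b) = G a b by rewrite /G /grad mxE.
under eq_bigr => a _ do under eq_bigr => b _ do rewrite hG /dq mxE dmul1 dmul2 mulrDl.
under eq_bigr => a _ do rewrite big_split /=.
rewrite big_split /=.
rewrite mxE.
under [X in _ = X]eq_bigr => l _ do rewrite !mxE mulrDl.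
rewrite big_split /=; congr (_ + _).
  under eq_bigr => a _ do under eq_bigr => b _ do rewrite -mulrA.
  under eq_bigr => a _ do rewrite -mulr_sumr.
  by rewrite sum_delta; apply: eq_bigr => b _; rewrite mulrC hG.
under eq_bigr => a _ do under eq_bigr => b _ do rewrite -mulrA.
under eq_bigr => a _ do rewrite -mulr_sumr sum_delta.
by apply: eq_bigr => a _; rewrite mulrC ?hG.
Qed.

Lemma grad_min m (phi : 'M[R]_m -> R) (M0 : 'M[R]_m) :
  (forall M : 'M[R]_m, differentiable phi M) ->
  (forall M : 'M[R]_m, phi M0 <= phi M) -> grad phi M0 = 0.
Proof.
move=> dphi hmin; apply/matrixP => i j; rewrite /grad !mxE.
set E := delta_mx i j.
rewrite -deriveE //.
pose g : R -> R := fun t => phi (t *: E + M0).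
have eqf t : (fun h : R => h^-1 *: (g (h *: 1 + t) - g t)) =
   (fun h : R => h^-1 *: (phi (h *: E + (t *: E + M0)) - phi (t *: E + M0))).
  apply/funext => h; rewrite /g; congr (_ *: (phi _ - _)).
  by rewrite scaler1 scalerDl addrA.
have der t : derivable g t 1.
  rewrite /derivable eqf; exact: (diff_derivable (v:=E) (dphi (t *: E + M0))).
have hd : is_derive (0 : R) (1 : R) g 0.
  apply: (@derive1_at_min _ g (-1) 1 0) => //.
  - by rewrite /= in_itv /= ltrN10 ltr01.
  - by move=> t _; rewrite /g scale0r add0r; exact: hmin.
have : 'D_1 g 0 = 0 by case: hd.
have e0 : (fun h : R => h^-1 *: ((g \o shift 0) (h *: 1) - g 0)) =
   (fun h : R => h^-1 *: ((phi \o shift M0) (h *: E) - phi M0)).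
  apply/funext => h /=; rewrite /g scale0r add0r; congr (_ *: (phi _ - _)).
  by rewrite scaler1 addr0.
by rewrite /derive e0.
Qed.

End Norms.

Section Alg.
Set Implicit Arguments.
Context {R : realType}.

Definition sq m k (A : 'M[R]_(m, k)) : R := \tr (A^T *m A).
Definition ip m k (A B : 'M[R]_(m, k)) : R := \tr (A^T *m B).

Lemma sqE m k (A : 'M[R]_(m, k)) : sq A = \sum_i \sum_j A i j ^+ 2.
Proof.
rewrite /sq /mxtrace exchange_big /=; apply: eq_bigr => j _.
by rewrite mxE; apply: eq_bigr => i _; rewrite mxE expr2.
Qed.

Lemma frobE m k (A : 'M[R]_(m, k)) : frob A = Num.sqrt (sq A).
Proof. by rewrite /frob sqE. Qed.

Lemma sq_ge0 m k (A : 'M[R]_(m, k)) : 0 <= sq A.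
Proof. by rewrite sqE; apply: sumr_ge0 => i _; apply: sumr_ge0 => j _; exact: sqr_ge0. Qed.

Lemma trB m k (A B : 'M[R]_(m, k)) : (A - B)^T = A^T - B^T.
Proof. by apply/matrixP => i j; rewrite !mxE. Qed.
Lemma trD2 m k (A B : 'M[R]_(m, k)) : (A + B)^T = A^T + B^T.
Proof. by apply/matrixP => i j; rewrite !mxE. Qed.

Lemma ipC m k (A B : 'M[R]_(m, k)) : ip A B = ip B A.
Proof. by rewrite /ip -mxtrace_tr trmx_mul trmxK. Qed.

Lemma sqB m k (A B : 'M[R]_(m, k)) : sq (A - B) = sq A - 2 * ip A B + sq B.
Proof.
rewrite /sq trB mulmxBl !mulmxBr !raddfB /= -/(ip A B) -/(ip B A) ipC /ip.
ring.
Qed.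

Lemma sqD m k (A B : 'M[R]_(m, k)) : sq (A + B) = sq A + 2 * ip A B + sq B.
Proof.
rewrite /sq trD2 mulmxDl !mulmxDr !mxtraceD -/(ip A B) -/(ip B A) ipC /ip.
ring.
Qed.

Lemma sq_tr m (A : 'M[R]_m) : sq A^T = sq A.
Proof. by rewrite /sq trmxK mxtrace_mulC. Qed.

Lemma sq_sym_le m (G : 'M[R]_m) : sq (G + G^T) <= 4 * sq G.
Proof.
have h := sq_ge0 (G - G^T).
rewrite sqB sq_tr in h; rewrite sqD sq_tr.
lra.
Qed.

Lemma key m k (A : 'M[R]_m) (B : 'M[R]_(m, k)) :
  sq (A *m B *m B^T) <= sq (A *m B) -> sq (A *m B) <= sq A.
Proof.
move=> h.
have e : ip A (A *m B *m B^T) = sq (A *m B).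
  rewrite /ip /sq mxtrace_mulC.
  have -> : A *m B *m B^T *m A^T = (A *m B) *m (A *m B)^T by rewrite trmx_mul !mulmxA.
  by rewrite mxtrace_mulC.
have := sq_ge0 (A - A *m B *m B^T).
rewrite sqB e; lra.
Qed.

Lemma key2 m k (A : 'M[R]_m) (X : 'M[R]_(m, k)) (S : 'M[R]_k) eta :
  0 <= eta -> S \in unitmx -> S^T = S -> S *m S = X^T *m X + eta%:M ->
  sq (A *m (X *m invmx S) *m (X *m invmx S)^T) <= sq (A *m (X *m invmx S)).
Proof.
move=> eta0 hS hST hSS; set P := invmx S; set B := X *m P; set C := A *m B.
have hPT : P^T = P by rewrite /P trmx_inv hST.
have hXX : X^T *m X = S *m S - eta%:M by rewrite hSS addrK.
have hBB : B^T *m B = 1%:M - eta *: (P *m P).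
  rewrite /B trmx_mul hPT.
  have -> : P *m X^T *m (X *m P) = P *m (X^T *m X) *m P by rewrite !mulmxA.
  rewrite hXX mulmxBr mulmxBl.
  have -> : P *m (S *m S) *m P = (P *m S) *m (S *m P) by rewrite !mulmxA.
  by rewrite mulVmx // mulmxV // mulmx1 mul_mx_scalar -scalemxAl.
have e1 : sq (C *m B^T) = \tr (C^T *m C *m (B^T *m B)).
  rewrite /sq trmx_mul trmxK.
  have -> : B *m C^T *m (C *m B^T) = B *m (C^T *m C *m B^T) by rewrite !mulmxA.
  by rewrite mxtrace_mulC !mulmxA.
have e2 : \tr (C^T *m C *m (P *m P)) = sq (C *m P).
  rewrite /sq [(C *m P)^T]trmx_mul hPT.
  have -> : P *m C^T *m (C *m P) = P *m (C^T *m C *m P) by rewrite !mulmxA.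
  by rewrite [in RHS]mxtrace_mulC !mulmxA.
rewrite e1 hBB mulmxBr mulmx1 raddfB /= -scalemxAr mxtraceZ e2.
have := sq_ge0 (C *m P).
by move=> h; rewrite gerBl mulr_ge0.
Qed.

Lemma posdef_unit m (H : 'M[R]_m) : posdef H -> H \in unitmx.
Proof.
case=> _ hpos; apply/negPn/negP => hn.
have hK : kermx H != 0 by rewrite kermx_eq0 row_free_unit.
have [i hi] : exists i, row i (kermx H) != 0.
  case: (pickP (fun i => row i (kermx H) != 0)) => [i hi|h0]; first by exists i.
  move/negP: hK; case; apply/eqP/row_matrixP => i.
  by have := h0 i => /negbFE/eqP ->; rewrite row0.
set u := row i (kermx H).
have hu : u *m H = 0 by apply/sub_kermxP; exact: row_sub.
have := hpos u^T; rewrite trmx_eq0 => /(_ hi).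
by rewrite trmxK hu mul0mx mxE ltxx.
Qed.

End Alg.

Theorem lemma23 (R : realType) (n r : nat) (phi : 'M[R]_n -> R) (L : R)
  (Mstar : 'M[R]_n) (X : 'M[R]_(n, r)) (eta : R) (S : 'M[R]_r) :
  (forall M : 'M[R]_n, differentiable phi M) ->
  grad_lipschitz phi L ->
  (forall M : 'M[R]_n, phi Mstar <= phi M) ->
  psd Mstar ->
  0 <= eta ->
  posdef (X^T *m X + eta%:M) ->
  psd S -> S *m S = X^T *m X + eta%:M ->
  let f := fun Y : 'M[R]_(n, r) => phi (Y *m Y^T) in
  let V := grad f X *m invmx (X^T *m X + eta%:M) in
  locnorm S V = duallocnorm S (grad f X) /\
  duallocnorm S (grad f X) <= 2 * L * frob (X *m X^T - Mstar).
Proof.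
move=> dphi hlip hmin hMs eta0 hpd hS hSS f V.
have hH := posdef_unit hpd.
have hH' : S *m S \in unitmx by rewrite hSS.
have hSu : S \in unitmx by move: hH'; rewrite unitmx_mul => /andP[].
have hST : S^T = S by case: hS.
set G := grad phi (X *m X^T).
have hgf : grad f X = (G + G^T) *m X by exact: grad_f.
split.
  rewrite /locnorm /duallocnorm /V -mulmxA; congr (frob (_ *m _)).
  rewrite -hSS; set Q := invmx (S *m S).
  have -> : Q *m S = Q *m (S *m S) *m invmx S by rewrite mulmxA mulmxK.
  by rewrite mulVmx // mul1mx.
rewrite /duallocnorm hgf -mulmxA.
have h1 : sq ((G + G^T) *m (X *m invmx S)) <= sq (G + G^T).
  by apply: key; apply: key2 eta0 hSu hST hSS.
have hG0 : grad phi Mstar = 0 by apply: grad_min.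
have hL := hlip Mstar (X *m X^T - Mstar).
rewrite (addrC Mstar) subrK hG0 subr0 -/G in hL.
rewrite !frobE in hL *.
have h2 : Num.sqrt (sq ((G + G^T) *m (X *m invmx S))) <= Num.sqrt (4 * sq G).
  rewrite ler_sqrt ?mulr_ge0 ?sq_ge0 //; exact: le_trans h1 (sq_sym_le G).
have e4 : Num.sqrt (4 * sq G) = 2 * Num.sqrt (sq G).
  rewrite sqrtrM // (_ : 4 = 2 ^+ 2); last by rewrite expr2; lra.
  by rewrite sqrtr_sqr ger0_norm.
apply: le_trans h2 _; rewrite e4 -mulrA ler_wpM2l //.
Qed.
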